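(* Let $\psi_1,\psi_2$ be real random fields on $\mathbb{R}^2$ and $k_R>0$, and let $E(k)$, $G_1(k)$, $G_2(k)$, $P(k)$, $\Gamma(k)$ be as defined in the context. Then for every wavenumber $k\in(0,+\infty)$ with $E(k)>0$, \[ |2\Gamma(k)-1| \le \frac{k^2+[1-P(k)]\,k_R^2}{k^2+k_R^2\,P(k)}. \]
   Context: Two-layer quasi-geostrophic setting. $\psi_1,\psi_2$ are the (random) streamfunctions of the upper and lower layer, real fields on $\mathbb{R}^2$ with Fourier transforms $\hat\psi_\alpha$, so that $\psi_\alpha(\mathbf{x})=\int_{\mathbb{R}^2}\hat\psi_\alpha(\mathbf{k})e^{i\mathbf{k}\cdot\mathbf{x}}\,d\mathbf{k}$; $\langle\cdot\rangle$ denotes ensemble average. For fields $a,b$ and $k>0$ define the bracket \[ \langle a,b\rangle_k=\frac12\int_{A\in SO(2)} d\Omega(A)\; k\,\big\langle \hat a(kA\mathbf{e})\overline{\hat b(kA\mathbf{e})}+\overline{\hat a(kA\mathbf{e})}\hat b(kA\mathbf{e})\big\rangle, \] where $\mathbf{e}$ is a fixed unit vector and $d\Omega$ is the rotation-invariant measure on $SO(2)$; it is symmetric, bilinear, satisfies $\langle a,a\rangle_k\ge 0$ and $\langle \Delta a,b\rangle_k=\langle a,\Delta b\rangle_k=-k^2\langle a,b\rangle_k$. The potential vorticities are $q_1=\Delta\psi_1+\frac{k_R^2}{2}(\psi_2-\psi_1)$ and $q_2=\Delta\psi_2-\frac{k_R^2}{2}(\psi_2-\psi_1)$, with $k_R>0$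 the Rossby wavenumber (a constant Coriolis parameter does not contribute at $k>0$ and is omitted). Let $\psi=(\psi_1+\psi_2)/2$, $\tau=(\psi_1-\psi_2)/2$. Define the energy spectrum $E(k)=-\langle\psi_1,q_1\rangle_k-\langle\psi_2,q_2\rangle_k$, which equals $E_K(k)+E_P(k)$ with barotropic spectrum $E_K(k)=2k^2\langle\psi,\psi\rangle_k$ and baroclinic spectrum $E_P(k)=2(k^2+k_R^2)\langle\tau,\tau\rangle_k$. Define potential enstrophy spectra $G_\alpha(k)=\langle q_\alpha,q_\alpha\rangle_k$ and $G(k)=G_1(k)+G_2(k)$ (when $E(k)>0$ one has $G(k)>0$). For $k$ with $E(k)>0$ define $P(k)=E_P(k)/E(k)\in[0,1]$ (so $E_K=(1-P)E$) and $\Gamma(k)=G_1(k)/G(k)\in[0,1]$ (so $G_2=(1-\Gamma)G$). *)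

(* Defs.v *)
From HB Require Import structures.
From mathcomp Require Import all_boot all_order all_algebra.
From mathcomp Require Import all_classical all_reals all_analysis.
Set Implicit Arguments. Unset Strict Implicit. Unset Printing Implicit Defensive.
Import Order.TTheory GRing.Theory Num.Theory.
Import numFieldNormedType.Exports.
Local Open Scope classical_set_scope.
Local Open Scope ring_scope.

(* A (random) field is represented through its (random) Fourier transform:
   fhat omega x y = (Re, Im) of \hat a(x,y) for the sample omega. *)
Definition FT (T : Type) (R : realType) := T -> R -> R -> R * R.

Section FTops.
Context {T : Type} {R : realType}.

Definition ftadd (a b : FT T R) : FT T R :=
  fun w x y => ((a w x y).1 + (b w x y).1, (a w x y).2 + (b w x y).2).
Definition ftscale (c : R) (a : FT T R) : FT T R :=
  fun w x y => (c * (a w x y).1, c * (a w x y).2).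
(* Fourier transform of the Laplacian: \hat{Delta a}(xi) = -|xi|^2 \hat a(xi) *)
Definition ftlap (a : FT T R) : FT T R :=
  fun w x y => (- (x ^+ 2 + y ^+ 2) * (a w x y).1, - (x ^+ 2 + y ^+ 2) * (a w x y).2).

Definition real_field (a : FT T R) : Prop :=
  forall w x y, (a w (- x) (- y)).1 = (a w x y).1 /\
                (a w (- x) (- y)).2 = - (a w x y).2.

(* the point k A e with A the rotation of angle theta and e = (1,0) *)
Definition on_circle (a : FT T R) (k : R) (z : T * R) : R * R :=
  a z.1 (k * cos z.2) (k * sin z.2).

(* (u vbar + ubar v) for u = (ur,ui), v = (vr,vi): equals 2 (ur vr + ui vi) *)
Definition herm2 (u v : R * R) : R := 2 * (u.1 * v.1 + u.2 * v.2).
End FTops.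

Section Bracket.
Context {d : measure_display} {Om : measurableType d} {R : realType}.
Variable (P : probability Om R).

(* product of the ensemble average and the rotation-invariant measure on
   SO(2), parametrized by the angle theta in [0, 2 pi[ *)
Definition PxSO2 := product_measure1 P (@lebesgue_measure R).
Definition SO2dom : set (Om * R) := setT `*` `[0, 2 * pi[%classic.

Definition bracket (a b : FT Om R) (k : R) : R :=
  2^-1 * k * Rintegral PxSO2 SO2dom
    (fun z => herm2 (on_circle a k z) (on_circle b k z)).

Variables (kR : R) (psi1 psi2 : FT Om R).

Definition q1 : FT Om R :=
  ftadd (ftlap psi1) (ftscale (kR ^+ 2 / 2) (ftadd psi2 (ftscale (-1) psi1))).
Definition q2 : FT Om R :=
  ftadd (ftlap psi2) (ftscale (- (kR ^+ 2 / 2)) (ftadd psi2 (ftscale (-1) psi1))).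
Definition psiB : FT Om R := ftscale (2^-1) (ftadd psi1 psi2).
Definition tauB : FT Om R := ftscale (2^-1) (ftadd psi1 (ftscale (-1) psi2)).

Definition Espec (k : R) : R := - bracket psi1 q1 k - bracket psi2 q2 k.
Definition EKspec (k : R) : R := 2 * k ^+ 2 * bracket psiB psiB k.
Definition EPspec (k : R) : R := 2 * (k ^+ 2 + kR ^+ 2) * bracket tauB tauB k.
Definition G1spec (k : R) : R := bracket q1 q1 k.
Definition G2spec (k : R) : R := bracket q2 q2 k.
Definition Gspec (k : R) : R := G1spec k + G2spec k.
Definition Pfrac (k : R) : R := EPspec k / Espec k.
Definition Gammafrac (k : R) : R := G1spec k / Gspec k.

Definition L2_on_circle (a : FT Om R) (k : R) : Prop :=
  measurable_fun SO2dom (fun z => (on_circle a k z).1) /\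
  measurable_fun SO2dom (fun z => (on_circle a k z).2) /\
  PxSO2.-integrable SO2dom (fun z => ((on_circle a k z).1 ^+ 2)%:E) /\
  PxSO2.-integrable SO2dom (fun z => ((on_circle a k z).2 ^+ 2)%:E).
End Bracket.

(* Main.v *)
Require Import Defs.
From HB Require Import structures.
From mathcomp Require Import all_boot all_order all_algebra.
From mathcomp Require Import all_classical all_reals all_analysis.
From mathcomp Require Import ring lra.
Import Order.TTheory GRing.Theory Num.Theory.
Local Open Scope ring_scope.

Lemma lin3 (d : measure_display) (T : measurableType d) (R : realType)
  (mu : measure T R) (D : set T) (f g h : T -> R) (a b c : R) :
  measurable D ->
  mu.-integrable D (EFin \o f) -> mu.-integrable D (EFin \o g) ->
  mu.-integrable D (EFin \o h) ->
  Rintegral mu D (fun x => a * f x + b * g x + c * h x) =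
  a * Rintegral mu D f + b * Rintegral mu D g + c * Rintegral mu D h.
Proof.
move=> mD If Ig Ih.
have IZ : forall r (u : T -> R), mu.-integrable D (EFin \o u) ->
    mu.-integrable D (EFin \o (fun x => r * u x)).
  move=> r u Iu; have := integrableZl mD r Iu.
  by apply: (eq_integrable mD) => x _ /=.
have ID : forall (u v : T -> R), mu.-integrable D (EFin \o u) ->
    mu.-integrable D (EFin \o v) ->
    mu.-integrable D (EFin \o (fun x => u x + v x)).
  move=> u v Iu Iv; have := integrableD mD Iu Iv.
  by apply: (eq_integrable mD) => x _ /=.
rewrite RintegralD //; last by apply: IZ.
  rewrite RintegralD //; try by apply: IZ.
  by rewrite !RintegralZl.
by apply: ID; apply: IZ.
Qed.
Lemma alg (R : realFieldType) (K r a b c e ep g1 g2 : R) :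
  0 < K -> 0 < r -> 0 <= a -> 0 <= b -> 0 <= a + b - 2 * c -> 0 <= a + b + 2 * c ->
  e = 2 * K * a + 2 * (K + r) * b -> 0 < e ->
  ep = 2 * (K + r) * b ->
  g1 = K ^+ 2 * a + 2 * K * (K + r) * c + (K + r) ^+ 2 * b ->
  g2 = K ^+ 2 * a - 2 * K * (K + r) * c + (K + r) ^+ 2 * b ->
  `|2 * (g1 / (g1 + g2)) - 1| <= (K + (1 - ep / e) * r) / (K + r * (ep / e)).
Proof.
move=> K0 r0 a0 b0 h1 h2 -> e0 -> -> ->.
set D := K ^+ 2 * a + (K + r) ^+ 2 * b.
have D0 : 0 < D.
  have h3 : 0 < K * a + (K + r) * b by nra.
  have h4 : K * (K * a + (K + r) * b) <= D.
    rewrite /D -subr_ge0.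
    have -> : K ^+ 2 * a + (K + r) ^+ 2 * b - K * (K * a + (K + r) * b) = r * (K + r) * b by ring.
    by apply: mulr_ge0 => //; apply: mulr_ge0; lra.
  by apply: (lt_le_trans _ h4); apply: mulr_gt0.
have -> : 2 * ((K ^+ 2 * a + 2 * K * (K + r) * c + (K + r) ^+ 2 * b) /
   (K ^+ 2 * a + 2 * K * (K + r) * c + (K + r) ^+ 2 * b +
    (K ^+ 2 * a - 2 * K * (K + r) * c + (K + r) ^+ 2 * b))) - 1
   = (2 * K * (K + r) * c) / D.
  rewrite /D; field; rewrite -/D (gt_eqF D0) /=; apply: lt0r_neq0.
  have -> : K ^+ 2 * a + 2 * K * (K + r) * c + (K + r) ^+ 2 * b +
   (K ^+ 2 * a - 2 * K * (K + r) * c + (K + r) ^+ 2 * b) = 2 * D by rewrite /D; ring.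
  by apply: mulr_gt0.
have -> : (K + (1 - 2 * (K + r) * b / (2 * K * a + 2 * (K + r) * b)) * r) /
   (K + r * (2 * (K + r) * b / (2 * K * a + 2 * (K + r) * b)))
   = K * (K + r) * (a + b) / D.
  rewrite /D; field; rewrite -/D (gt_eqF D0) (gt_eqF e0) /=; apply: lt0r_neq0.
  apply: ltr_wpDr; last exact: mulr_gt0.
  apply: mulr_ge0; first lra.
  apply: mulr_ge0 => //; lra.
rewrite normrM (@gtr0_norm _ D^-1) ?invr_gt0 // ler_pM2r ?invr_gt0 //.
have m0 : 0 <= K * (K + r) by apply: mulr_ge0; lra.
rewrite ler_norml; apply/andP; split; rewrite -subr_ge0.
  have -> : 2 * K * (K + r) * c - - (K * (K + r) * (a + b)) = K * (K + r) * (a + b + 2 * c) by ring.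
  exact: mulr_ge0.
have -> : K * (K + r) * (a + b) - 2 * K * (K + r) * c = K * (K + r) * (a + b - 2 * c) by ring.
exact: mulr_ge0.
Qed.

Lemma lapE (R : realType) (k t : R) : (k * cos t) ^+ 2 + (k * sin t) ^+ 2 = k ^+ 2.
Proof. by rewrite !exprMn -mulrDr cos2Dsin2 mulr1. Qed.

Theorem proposition1 (d : measure_display) (Om : measurableType d)
  (R : realType) (P : probability Om R) (kR : R) (psi1 psi2 : FT Om R) (k : R) :
  0 < kR ->
  real_field psi1 -> real_field psi2 ->
  0 < k ->
  L2_on_circle P psi1 k -> L2_on_circle P psi2 k ->
  0 < Espec P kR psi1 psi2 k ->
  `|2 * Gammafrac P kR psi1 psi2 k - 1| <=
    (k ^+ 2 + (1 - Pfrac P kR psi1 psi2 k) * kR ^+ 2) /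
    (k ^+ 2 + kR ^+ 2 * Pfrac P kR psi1 psi2 k).
Proof.
move=> kR0 _ _ k0 [m1 [m1' [i1 i1']]] [m2 [m2' [i2 i2']]] E0.
have mD0 : measurable (SO2dom : set (Om * R)).
  exact: measurableX measurableT (measurable_itv _).
have mD : @measurable _ (Om * g_sigma_algebraType (R.-ocitv.-measurable))%type SO2dom.
  exact mD0.
pose x1 z := (on_circle psi1 k z).1. pose y1 z := (on_circle psi1 k z).2.
pose x2 z := (on_circle psi2 k z).1. pose y2 z := (on_circle psi2 k z).2.
pose h11 z := x1 z ^+ 2 + y1 z ^+ 2.
pose h22 z := x2 z ^+ 2 + y2 z ^+ 2.
pose h12 z := x1 z * x2 z + y1 z * y2 z.
have I11 : (PxSO2 P).-integrable SO2dom (EFin \o h11).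
  have := integrableD mD i1 i1'.
  by apply: (eq_integrable mD) => z _.
have I22 : (PxSO2 P).-integrable SO2dom (EFin \o h22).
  have := integrableD mD i2 i2'.
  by apply: (eq_integrable mD) => z _.
have I12 : (PxSO2 P).-integrable SO2dom (EFin \o h12).
  apply: (le_integrable mD _ _ (integrableD mD I11 I22)).
    apply/measurable_realfun.measurable_EFinP.
    have mh : measurable_fun (SO2dom : set (Om * R)) h12.
      by apply: measurable_realfun.measurable_funD; apply: measurable_realfun.measurable_funM.
    exact mh.
  move=> z _ /=; rewrite lee_fin.
  have hx := sqr_ge0 (x1 z - x2 z). have hy := sqr_ge0 (y1 z - y2 z).
  have hx' := sqr_ge0 (x1 z + x2 z). have hy' := sqr_ge0 (y1 z + y2 z).
  rewrite (@ger0_norm _ (h11 z + h22 z)); last by rewrite /h11 /h22; nra.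
  rewrite ler_norml /h11 /h22 /h12; apply/andP; split; nra.
pose J11 := Rintegral (PxSO2 P) SO2dom h11.
pose J22 := Rintegral (PxSO2 P) SO2dom h22.
pose J12 := Rintegral (PxSO2 P) SO2dom h12.
pose K := k ^+ 2. pose r := kR ^+ 2.
have lin : forall a b c, Rintegral (PxSO2 P) SO2dom
    (fun z => a * h11 z + b * h22 z + c * h12 z) = a * J11 + b * J22 + c * J12.
  by move=> a b c; apply: lin3.
have B1 : bracket P psi1 (q1 kR psi1 psi2) k =
    2^-1 * k * (- (2 * K + r) * J11 + 0 * J22 + r * J12).
  rewrite /bracket -lin; congr (_ * _); apply: eq_Rintegral => z _.
  rewrite /herm2 /on_circle /q1 /ftadd /ftlap /ftscale /= lapE.
  rewrite /h11 /h22 /h12 /x1 /x2 /y1 /y2 /on_circle /K /r.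
  by field.
have B2 : bracket P psi2 (q2 kR psi1 psi2) k =
    2^-1 * k * (0 * J11 + (- (2 * K + r)) * J22 + r * J12).
  rewrite /bracket -lin; congr (_ * _); apply: eq_Rintegral => z _.
  rewrite /herm2 /on_circle /q1 /q2 /psiB /tauB /ftadd /ftlap /ftscale /= ?lapE.
  rewrite /h11 /h22 /h12 /x1 /x2 /y1 /y2 /on_circle /K /r.
  by field.
have Ba : bracket P (psiB psi1 psi2) (psiB psi1 psi2) k =
    2^-1 * k * ((2^-1) * J11 + (2^-1) * J22 + 1 * J12).
  rewrite /bracket -lin; congr (_ * _); apply: eq_Rintegral => z _.
  rewrite /herm2 /on_circle /q1 /q2 /psiB /tauB /ftadd /ftlap /ftscale /= ?lapE.
  rewrite /h11 /h22 /h12 /x1 /x2 /y1 /y2 /on_circle /K /r.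
  by field.
have Bb : bracket P (tauB psi1 psi2) (tauB psi1 psi2) k =
    2^-1 * k * ((2^-1) * J11 + (2^-1) * J22 + (-1) * J12).
  rewrite /bracket -lin; congr (_ * _); apply: eq_Rintegral => z _.
  rewrite /herm2 /on_circle /q1 /q2 /psiB /tauB /ftadd /ftlap /ftscale /= ?lapE.
  rewrite /h11 /h22 /h12 /x1 /x2 /y1 /y2 /on_circle /K /r.
  by field.
have G1 : bracket P (q1 kR psi1 psi2) (q1 kR psi1 psi2) k =
    2^-1 * k * ((2 * (K + r / 2) ^+ 2) * J11 + (2 * (r / 2) ^+ 2) * J22 + (- 4 * (K + r / 2) * (r / 2)) * J12).
  rewrite /bracket -lin; congr (_ * _); apply: eq_Rintegral => z _.
  rewrite /herm2 /on_circle /q1 /q2 /psiB /tauB /ftadd /ftlap /ftscale /= ?lapE.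
  rewrite /h11 /h22 /h12 /x1 /x2 /y1 /y2 /on_circle /K /r.
  by field.
have G2 : bracket P (q2 kR psi1 psi2) (q2 kR psi1 psi2) k =
    2^-1 * k * ((2 * (r / 2) ^+ 2) * J11 + (2 * (K + r / 2) ^+ 2) * J22 + (- 4 * (K + r / 2) * (r / 2)) * J12).
  rewrite /bracket -lin; congr (_ * _); apply: eq_Rintegral => z _.
  rewrite /herm2 /on_circle /q1 /q2 /psiB /tauB /ftadd /ftlap /ftscale /= ?lapE.
  rewrite /h11 /h22 /h12 /x1 /x2 /y1 /y2 /on_circle /K /r.
  by field.
have J11p : 0 <= J11.
  by apply: Rintegral_ge0 => z _; rewrite /h11 addr_ge0 ?sqr_ge0.
have J22p : 0 <= J22.
  by apply: Rintegral_ge0 => z _; rewrite /h22 addr_ge0 ?sqr_ge0.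
have Jp : 0 <= 1 * J11 + 1 * J22 + 2 * J12.
  rewrite -lin; apply: Rintegral_ge0 => z _; rewrite /h11 /h22 /h12.
  have := sqr_ge0 (x1 z + x2 z); have := sqr_ge0 (y1 z + y2 z); nra.
have Jm : 0 <= 1 * J11 + 1 * J22 + (-2) * J12.
  rewrite -lin; apply: Rintegral_ge0 => z _; rewrite /h11 /h22 /h12.
  have := sqr_ge0 (x1 z - x2 z); have := sqr_ge0 (y1 z - y2 z); nra.
have s0 : 0 < 2^-1 * k by apply: mulr_gt0; rewrite ?invr_gt0 ?ltr0n.
rewrite /Gammafrac /Pfrac /Gspec /G1spec /G2spec /EPspec /Espec in E0 *.
rewrite B1 B2 in E0 *; rewrite Bb G1 G2.
have K0 : 0 < K by rewrite /K exprn_gt0.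
have r0 : 0 < r by rewrite /r exprn_gt0.
apply: (@alg _ K r (2^-1 * k * (2^-1 * J11 + 2^-1 * J22 + J12))
   (2^-1 * k * (2^-1 * J11 + 2^-1 * J22 - J12))
   (2^-1 * k * (2^-1 * J11 - 2^-1 * J22))) => //.
- apply: mulr_ge0; first exact: ltW. lra.
- apply: mulr_ge0; first exact: ltW. lra.
- have -> : 2^-1 * k * (2^-1 * J11 + 2^-1 * J22 + J12) +
    2^-1 * k * (2^-1 * J11 + 2^-1 * J22 - J12) -
    2 * (2^-1 * k * (2^-1 * J11 - 2^-1 * J22)) = 2^-1 * k * J22 * 2 by field.
  apply: mulr_ge0; last lra. by apply: mulr_ge0; first exact: ltW.
- have -> : 2^-1 * k * (2^-1 * J11 + 2^-1 * J22 + J12) +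
    2^-1 * k * (2^-1 * J11 + 2^-1 * J22 - J12) +
    2 * (2^-1 * k * (2^-1 * J11 - 2^-1 * J22)) = 2^-1 * k * J11 * 2 by field.
  apply: mulr_ge0; last lra. by apply: mulr_ge0; first exact: ltW.
- by rewrite /K /r; field.
- by rewrite /K /r; field.
- by rewrite /K /r; field.
- by rewrite /K /r; field.
Qed.
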